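(* Let $K$ be a real biquadratic field with $\operatorname{sgnrk}(K)\le 3$. Then $N_{K/\mathbb{Q}}(\eta)=1$ for every $\eta\in\mathcal{O}_K^\times$.
   Context: A real biquadratic field is $K=\mathbb{Q}(\sqrt{D_1},\sqrt{D_2})$ of degree $4$ with $D_1,D_2>1$ squarefree integers (so $K$ is totally real). For $\alpha\in K^\times$, $\operatorname{sgn}(\alpha)\in\mathbb{F}_2^4$ records the signs of its four real embeddings ($0$ for positive, $1$ for negative). $\operatorname{sgnrk}(K)$ is the $\mathbb{F}_2$-dimension of the unit signature group $\{\operatorname{sgn}(\eta):\eta\in\mathcal{O}_K^\times\}$. *)

(* Defs.v *)
(* Real biquadratic fields K = Q(sqrt D1, sqrt D2) are modelled
   concretely: an element of K is its coordinate vector (a,b,c,d) in the Q-basis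
   1, sqrt D1, sqrt D2, sqrt D1 * sqrt D2, and its four real embeddings are
   computed in the real closed field [realalg] of real algebraic numbers. *)
From HB Require Import structures.
From mathcomp Require Import all_boot all_order all_algebra.
From mathcomp Require Import boolp.
From mathcomp Require Import realalg.
Set Implicit Arguments. Unset Strict Implicit. Unset Printing Implicit Defensive.
Import Order.TTheory GRing.Theory Num.Theory.
Local Open Scope ring_scope.

Definition squarefree (n : nat) : Prop :=
  forall p : nat, prime p -> ~~ (p * p %| n)%N.

Definition bq := (rat * rat * rat * rat)%type.

Definition sgnb (s : bool) : realalg := if s then -1 else 1.

Definition emb (D1 D2 : nat) (s t : bool) (x : bq) : realalg :=
  let '(a, b, c, d) := x in
  ratr a + sgnb s * ratr b * Num.sqrt (D1%:R)
         + sgnb t * ratr c * Num.sqrt (D2%:R)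
         + sgnb s * sgnb t * ratr d * (Num.sqrt (D1%:R) * Num.sqrt (D2%:R)).

Definition val0 (D1 D2 : nat) (x : bq) : realalg := emb D1 D2 false false x.

Definition integralK (D1 D2 : nat) (x : bq) : Prop :=
  exists p : {poly int}, p \is monic /\
    root (map_poly (fun z : int => z%:~R : realalg) p) (val0 D1 D2 x).

Definition unitK (D1 D2 : nat) (x : bq) : Prop :=
  integralK D1 D2 x /\
  exists y : bq, integralK D1 D2 y /\ val0 D1 D2 x * val0 D1 D2 y = 1.

Definition embi (D1 D2 : nat) (i : 'I_4) (x : bq) : realalg :=
  emb D1 D2 (odd i) (2 <= i)%N x.

Definition normK (D1 D2 : nat) (x : bq) : realalg :=
  \prod_(i < 4) embi D1 D2 i x.

Definition sgnK (D1 D2 : nat) (x : bq) : 'rV['F_2]_4 :=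
  \row_(i < 4) (nat_of_bool (embi D1 D2 i x < 0)%R)%:R.

Definition unit_sgn_set (D1 D2 : nat) : {set 'rV['F_2]_4} :=
  [set v | `[< exists eta : bq, unitK D1 D2 eta /\ sgnK D1 D2 eta = v >]].

(* sgnrk(K) = F_2-dimension of the unit signature group (of its span, which equals it) *)
Definition sgnrk (D1 D2 : nat) : nat :=
  \dim (<< enum (unit_sgn_set D1 D2) >>%VS : {vspace 'rV['F_2]_4}).

(* Main.v *)
Require Import Defs.
From HB Require Import structures.
From mathcomp Require Import all_boot all_order all_algebra.
From mathcomp Require Import realalg.
From mathcomp Require Import all_field.
From mathcomp Require Import algC algnum.
From mathcomp Require Import boolp.
From mathcomp Require Import ring.
Import Order.TTheory GRing.Theory Num.Theory.
Local Open Scope ring_scope.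

Lemma nosq_log (n r : nat) : prime r -> odd (logn r n) -> forall q : rat, q ^+ 2 != n%:R.
Proof.
move=> pr odd_n q; apply/eqP => hq.
have n0 : (0 < n)%N by move: odd_n; case: (n) => //; rewrite logn0.
have dq0 : (denq q)%:~R != 0 :> rat by rewrite intr_eq0 denq_eq0.
have hz : (numq q) ^+ 2 = n%:Z * (denq q) ^+ 2.
  apply: (@intr_inj rat); rewrite !expr2 !intrM -[in LHS](divq_num_den q) in hq *.
  rewrite (_ : (n%:Z)%:~R = n%:R :> rat) // -hq; field; exact: dq0.
have := congr1 absz hz; rewrite abszM !abszX /= => hn.
have N0 : (0 < `|numq q|)%N.
  rewrite absz_gt0 numq_eq0; apply/eqP => q0; move: hq; rewrite q0 expr0n /= => /eqP.
  by rewrite eq_sym pnatr_eq0 => /eqP n0'; rewrite n0' in n0.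
have d0 : (0 < `|denq q|)%N by rewrite absz_gt0 denq_eq0.
have := congr1 (logn r) hn; rewrite lognM ?expn_gt0 ?d0 // !lognX => e.
have := congr1 odd e; rewrite oddD !oddM /= addbF => oe; by move: odd_n; rewrite -oe.
Qed.

Lemma sqf_le1 {D r} : (0 < D)%N -> squarefree D -> prime r -> (logn r D <= 1)%N.
Proof.
move=> D0 sq pr; have := sq r pr; rewrite mulnn (pfactor_dvdn 2 pr D0).
by rewrite -ltnNge ltnS.
Qed.

Lemma sqf_log D : (1 < D)%N -> squarefree D -> exists2 r, prime r & odd (logn r D).
Proof.
move=> D1 sq; have D0 : (0 < D)%N by apply: ltnW.
exists (pdiv D); first exact: pdiv_prime.
have pr := pdiv_prime D1.
have h1 := sqf_le1 D0 sq pr.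
have h2 : (1 <= logn (pdiv D) D)%N by rewrite -(pfactor_dvdn 1 pr D0) expn1 pdiv_dvd.
by have -> : logn (pdiv D) D = 1%N by apply/eqP; rewrite eqn_leq h1 h2.
Qed.

Lemma sqf_log2 D1 D2 : (1 < D1)%N -> (1 < D2)%N -> squarefree D1 -> squarefree D2 -> D1 <> D2 ->
  exists2 r, prime r & odd (logn r (D1 * D2)).
Proof.
move=> g1 g2 s1 s2 ne.
have p1 : (0 < D1)%N by apply: ltnW. have p2 : (0 < D2)%N by apply: ltnW.
case: (pselect (exists2 r, prime r & odd (logn r (D1 * D2)))) => // H.
exfalso; apply: ne; apply: eqn_from_log => // r.
case pr: (prime r); last first.
  by rewrite /logn pr.
have a1 := sqf_le1 p1 s1 pr; have a2 := sqf_le1 p2 s2 pr.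
case: (boolP (odd (logn r D1 + logn r D2))) => [o|].
  by exfalso; apply: H; exists r => //; rewrite lognM.
move: a1 a2; case: (logn r D1) => [|[|]] //; case: (logn r D2) => [|[|]] //.
Qed.

Section Indep.
Variable R : numFieldType.

Lemma indep1 {s : R} {m : rat} : s ^+ 2 = ratr m -> (forall q : rat, q ^+ 2 != m) ->
  forall {p q : rat}, ratr p + ratr q * s = 0 -> p = 0 /\ q = 0.
Proof.
move=> hs nsq p q e.
have [q0|q0] := eqVneq q 0.
  by move: e; rewrite q0 rmorph0 mul0r addr0 => /eqP; rewrite fmorph_eq0 => /eqP.
have qR : ratr q != 0 :> R by rewrite fmorph_eq0.
have es : s = ratr (- p / q).
  have e2 : ratr q * s = - ratr p by apply/eqP; rewrite -subr_eq0 opprK addrC e.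
  rewrite rmorphM rmorphN fmorphV /= -e2; field; exact: qR.
exfalso; move/eqP: (nsq (- p / q)); apply.
by apply: (fmorph_inj (@ratr R)); rewrite rmorphXn /= -es.
Qed.

Variables (s1 s2 : R) (d1 d2 : rat).
Hypotheses (h1 : s1 ^+ 2 = ratr d1) (h2 : s2 ^+ 2 = ratr d2).
Hypotheses (n1 : forall q : rat, q ^+ 2 != d1) (n2 : forall q : rat, q ^+ 2 != d2)
  (n12 : forall q : rat, q ^+ 2 != d1 * d2).

Lemma indep12 : (s1 * s2) ^+ 2 = ratr (d1 * d2).
Proof. by rewrite exprMn h1 h2 rmorphM. Qed.

Lemma indep3 a b c : ratr a + ratr b * s1 + ratr c * s2 = 0 -> [/\ a = 0, b = 0 & c = 0].
Proof.
move=> e.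
have e' : ratr (a ^+ 2 + b ^+ 2 * d1 - c ^+ 2 * d2) + ratr (a * b + a * b) * s1 = 0.
  have -> : ratr (a ^+ 2 + b ^+ 2 * d1 - c ^+ 2 * d2) + ratr (a * b + a * b) * s1
     = (ratr a + ratr b * s1) ^+ 2 - (ratr c * s2) ^+ 2 :> R.
    rewrite ?rmorphD ?rmorphB ?rmorphN ?rmorphM ?rmorphXn /= ?rmorph_nat -h1 -h2; ring.
  have -> : ratr a + ratr b * s1 = - (ratr c * s2) :> R by apply/eqP; rewrite -addr_eq0 e.
  by rewrite sqrrN subrr.
have [E1 E2] := indep1 h1 n1 e'.
have d10 : d1 != 0 by move: (n1 0); rewrite expr0n /= eq_sym.
have [a0|b0] : a = 0 \/ b = 0.
  by move/eqP: E2; rewrite -mulr2n mulrn_eq0 /= mulf_eq0 => /orP[] /eqP; [left|right].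
- move: E1; rewrite a0 expr0n /= add0r => /eqP; rewrite subr_eq0 => /eqP E1.
  have [c0|c0] := eqVneq c 0.
    move: E1; rewrite c0 expr0n /= mul0r => /eqP; rewrite mulf_eq0 (negPf d10) orbF.
    by rewrite expf_eq0 /= => /eqP b0.
  exfalso; move/eqP: (n12 (b * d1 / c)); apply.
  rewrite (_ : (b * d1 / c) ^+ 2 = (b ^+ 2 * d1) * d1 / c ^+ 2); last by field.
  by rewrite E1; field.
- move: E1; rewrite b0 expr0n /= mul0r addr0 => /eqP; rewrite subr_eq0 => /eqP E1.
  have [c0|c0] := eqVneq c 0.
    by move: E1; rewrite c0 expr0n /= mul0r => /eqP; rewrite expf_eq0 /= => /eqP.
  exfalso; move/eqP: (n2 (a / c)); apply.
  by rewrite expr_div_n E1; field.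
Qed.

Lemma indep4 a b c d : ratr a + ratr b * s1 + ratr c * s2 + ratr d * (s1 * s2) = 0 ->
  [/\ a = 0, b = 0, c = 0 & d = 0].
Proof.
move=> e.
have e' : ratr (a * c - b * d * d1) + ratr (b * c - a * d) * s1 + ratr (c ^+ 2 - d ^+ 2 * d1) * s2 = 0.
  rewrite -(mulr0 (ratr c - ratr d * s1)) -e.
  rewrite ?rmorphD ?rmorphB ?rmorphN ?rmorphM ?rmorphXn /= -h1; ring.
have [_ _ N] := indep3 _ _ _ e'.
have d10 : d1 != 0 by move: (n1 0); rewrite expr0n /= eq_sym.
move/eqP: N; rewrite subr_eq0 => /eqP N.
have [d0|d0] := eqVneq d 0; last first.
  exfalso; move/eqP: (n1 (c / d)); apply.
  by rewrite expr_div_n N; field.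
move: N; rewrite d0 expr0n /= mul0r => /eqP; rewrite expf_eq0 /= => /eqP c0.
move: e; rewrite c0 d0 !rmorph0 !mul0r !addr0 => /(indep1 h1 n1) [a0 b0].
by [].
Qed.

End Indep.

Definition embG {R : numFieldType} (r1 r2 : R) (x : bq) : R :=
  let '(a, b, c, d) := x in ratr a + ratr b * r1 + ratr c * r2 + ratr d * (r1 * r2).

Definition addbq (x y : bq) : bq :=
  let '(a, b, c, d) := x in let '(a', b', c', d') := y in (a + a', b + b', c + c', d + d').

Definition mulbq (D1 D2 : nat) (x y : bq) : bq :=
  let '(a, b, c, d) := x in let '(a', b', c', d') := y in
  (a * a' + D1%:R * b * b' + D2%:R * c * c' + (D1 * D2)%:R * d * d',
   a * b' + b * a' + D2%:R * (c * d' + d * c'),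
   a * c' + c * a' + D1%:R * (b * d' + d * b'),
   a * d' + d * a' + b * c' + c * b').

Definition cstbq (q : rat) : bq := (q, 0, 0, 0).

Section EmbG.
Variables (R : numFieldType) (D1 D2 : nat) (r1 r2 : R).
Hypotheses (h1 : r1 ^+ 2 = D1%:R) (h2 : r2 ^+ 2 = D2%:R).

Lemma embG_add x y : embG r1 r2 (addbq x y) = embG r1 r2 x + embG r1 r2 y.
Proof. case: x => [[[a b] c] d]; case: y => [[[a' b'] c'] d'] /=; rewrite !rmorphD /=; ring. Qed.

Lemma embG_cst q : embG r1 r2 (cstbq q) = ratr q.
Proof. by rewrite /= !rmorph0 !mul0r !addr0. Qed.

Lemma embG_mul x y : embG r1 r2 (mulbq D1 D2 x y) = embG r1 r2 x * embG r1 r2 y.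
Proof.
case: x => [[[a b] c] d]; case: y => [[[a' b'] c'] d'] /=.
rewrite ?rmorphD ?rmorphM /= ?ratr_nat ?natrM -h1 -h2; ring.
Qed.
End EmbG.
Arguments embG_mul {R D1 D2 r1 r2}.
Arguments embG_add {R r1 r2}.
Arguments embG_cst {R r1 r2}.

Lemma poly_bq (D1 D2 : nat) (p : {poly int}) (x : bq) : exists e : bq,
  forall (R : numFieldType) (r1 r2 : R), r1 ^+ 2 = D1%:R -> r2 ^+ 2 = D2%:R ->
  (map_poly (fun z : int => z%:~R : R) p).[embG r1 r2 x] = embG r1 r2 e.
Proof.
elim/poly_ind: p => [|p c [e He]].
  exists (cstbq 0) => R r1 r2 _ _; by rewrite map_poly0 horner0 embG_cst rmorph0.
exists (addbq (mulbq D1 D2 e x) (cstbq c%:~R)) => R r1 r2 h1 h2.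
have -> : (fun z : int => z%:~R : R) = @intmul R 1 by [].
rewrite rmorphD rmorphM /= map_polyX map_polyC hornerMXaddC.
rewrite embG_add (embG_mul h1 h2) embG_cst ratr_int -(He R r1 r2 h1 h2) //.
Qed.

Definition p1 (n : nat) : nat := if odd n then n.-1 else n.+1.
Definition p2 (n : nat) : nat := if (n < 2)%N then (n + 2)%N else (n - 2)%N.
Definition p3 (n : nat) : nat := p1 (p2 n).

Ltac brute odd4 b := 
  apply/rowP => -[[|[|[|[|?]]]] ?]; rewrite !mxE //=; move: odd4;
  rewrite /p1 /p2 /p3 /=; try (case: (b 0%N)); case: (b 1%N); case: (b 2%N); case: (b 3%N) => //= _;
  apply/eqP; by [].
Lemma span4 (S : {set 'rV['F_2]_4}) (b : nat -> bool) :
  b 0%N (+) b 1%N (+) b 2%N (+) b 3%N ->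
  \row_(i < 4) ((b i : nat)%:R : 'F_2) \in S ->
  \row_(i < 4) ((b (p1 i) : nat)%:R : 'F_2) \in S ->
  \row_(i < 4) ((b (p2 i) : nat)%:R : 'F_2) \in S ->
  \row_(i < 4) ((b (p3 i) : nat)%:R : 'F_2) \in S ->
  \row_(i < 4) (1 : 'F_2) \in S ->
  (4 <= \dim (<< enum S >>%VS : {vspace 'rV['F_2]_4}))%N.
Proof.
move=> odd4 I0 I1 I2 I3 Io.
set V := (<< enum S >>%VS : {vspace 'rV['F_2]_4}).
have inV v : v \in S -> v \in V by move=> vS; apply: memv_span; rewrite mem_enum.
set u0 := \row_(i < 4) _ in I0; set u1 := \row_(i < 4) _ in I1.
set u2 := \row_(i < 4) _ in I2; set u3 := \row_(i < 4) _ in I3.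
set o := \row_(i < 4) _ in Io.
set x0 : 'F_2 := (b 0%N : nat)%:R.
set a : 'F_2 := (b 0%N : nat)%:R + (b 1%N : nat)%:R.
set c : 'F_2 := (b 0%N : nat)%:R + (b 2%N : nat)%:R.
set f := u0 + u2 + c *: o.
set g := u0 + u1 + a *: o.
set e3 := u0 + x0 *: o + a *: f + c *: g.
have u0V := inV _ I0; have u1V := inV _ I1; have u2V := inV _ I2; have oV := inV _ Io.
have fV : f \in V by rewrite !memvD ?memvZ.
have gV : g \in V by rewrite !memvD ?memvZ.
have e3V : e3 \in V by rewrite !memvD ?memvZ.
have E3 : e3 = delta_mx 0 3.
  rewrite /e3 /f /g /u0 /u1 /u2 /o /x0 /a /c; brute odd4 b.
have EF : f = delta_mx 0 1 + delta_mx 0 3.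
  rewrite /f /u0 /u2 /o /c; brute odd4 b.
have EG : g = delta_mx 0 2 + delta_mx 0 3.
  rewrite /g /u0 /u1 /o /a; brute odd4 b.
have E0 : o + e3 + f + g = delta_mx 0 0.
  rewrite E3 EF EG /o; apply/rowP => i; rewrite !mxE.
  case: i => [[|[|[|[|i]]]] ] //= _; apply/eqP; by [].
have dV j : delta_mx 0 j \in V.
  case: j => [[|[|[|[|j]]]] ] //= Hj.
  - have -> : Ordinal Hj = 0 by apply: val_inj.
    rewrite -E0; apply: memvD => //; apply: memvD => //; exact: memvD.
  - have -> : Ordinal Hj = 1 by apply: val_inj.
    have -> : delta_mx 0 1 = f + e3 :> 'rV['F_2]_4.
      rewrite EF E3; apply/rowP => i; rewrite !mxE.
      case: i => [[|[|[|[|i]]]] ] //= _; apply/eqP; by [].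
    by rewrite memvD.
  - have -> : Ordinal Hj = 2 by apply: val_inj.
    have -> : delta_mx 0 2 = g + e3 :> 'rV['F_2]_4.
      rewrite EG E3; apply/rowP => i; rewrite !mxE.
      case: i => [[|[|[|[|i]]]] ] //= _; apply/eqP; by [].
    by rewrite memvD.
  - have -> : Ordinal Hj = 3 by apply: val_inj.
    by rewrite -E3.
have full : (fullv <= V)%VS.
  apply/subvP => w _; rewrite (row_sum_delta w); apply: memv_suml => j _.
  by rewrite memvZ.
have := dimvS full; rewrite dimvf; exact.
Qed.

Definition nq (D1 D2 : nat) (x : bq) : rat :=
  let '(a, b, c, d) := x in
  let A := a ^+ 2 + c ^+ 2 * D2%:R - D1%:R * b ^+ 2 - (D1 * D2)%:R * d ^+ 2 in
  let C := a * c - D1%:R * b * d in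
  A ^+ 2 - D2%:R * (C + C) ^+ 2.

Lemma norm_formula (R : numFieldType) (D1 D2 : nat) (r1 r2 : R) :
  r1 ^+ 2 = D1%:R -> r2 ^+ 2 = D2%:R -> forall x,
  embG r1 r2 x * embG (- r1) r2 x * embG r1 (- r2) x * embG (- r1) (- r2) x = ratr (nq D1 D2 x).
Proof.
move=> h1 h2 [[[a b] c] d] /=.
rewrite ?(rmorphD, rmorphN, rmorphM, rmorphXn) /= ?ratr_nat ?natrM -h1 -h2; ring.
Qed.

Lemma sqrt_sq (D : nat) : Num.sqrt (D%:R : realalg) ^+ 2 = D%:R.
Proof. by rewrite sqr_sqrtr // ler0n. Qed.

Lemma sgnb_sq (R : numFieldType) s (r : R) : ((if s then -1 else 1) * r) ^+ 2 = r ^+ 2.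
Proof. by case: s; rewrite ?mulN1r ?mul1r ?sqrrN. Qed.

Lemma emb_embG D1 D2 s t x :
  emb D1 D2 s t x = embG (sgnb s * Num.sqrt D1%:R) (sgnb t * Num.sqrt D2%:R) x.
Proof. case: x => [[[a b] c] d] /=; ring. Qed.

Definition cj1 (x : bq) : bq := let '(a, b, c, d) := x in (a, - b, c, - d).
Definition cj2 (x : bq) : bq := let '(a, b, c, d) := x in (a, b, - c, - d).
Definition cj3 (x : bq) : bq := let '(a, b, c, d) := x in (a, - b, - c, d).

Lemma emb_cj1 D1 D2 s t x : emb D1 D2 s t (cj1 x) = emb D1 D2 (~~ s) t x.
Proof. case: x => [[[a b] c] d]; case: s; case: t; rewrite /emb /sgnb /= !rmorphN /=; ring. Qed.
Lemma emb_cj2 D1 D2 s t x : emb D1 D2 s t (cj2 x) = emb D1 D2 s (~~ t) x.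
Proof. case: x => [[[a b] c] d]; case: s; case: t; rewrite /emb /sgnb /= !rmorphN /=; ring. Qed.
Lemma emb_cj3 D1 D2 s t x : emb D1 D2 s t (cj3 x) = emb D1 D2 (~~ s) (~~ t) x.
Proof. case: x => [[[a b] c] d]; case: s; case: t; rewrite /emb /sgnb /= !rmorphN /=; ring. Qed.

Lemma int_unit (k k' : int) : k * k' = 1 -> k = 1 \/ k = -1.
Proof.
move=> h; have := congr1 absz h; rewrite abszM /= => /eqP; rewrite muln_eq1 => /andP [/eqP hk _].
by case: k {h} hk => [[|[|n]]|[|n]] //= _; [left|right].
Qed.

Lemma prod4 (R : comRingType) (e1 e2 e3 e4 f1 f2 f3 f4 : R) :
  e1 * f1 = 1 -> e2 * f2 = 1 -> e3 * f3 = 1 -> e4 * f4 = 1 ->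
  (e1 * e2 * e3 * e4) * (f1 * f2 * f3 * f4) = 1.
Proof.
move=> h1 h2 h3 h4.
have -> : (e1 * e2 * e3 * e4) * (f1 * f2 * f3 * f4) = (e1 * f1) * (e2 * f2) * (e3 * f3) * (e4 * f4) by ring.
by rewrite h1 h2 h3 h4 !mul1r.
Qed.

Section Main.
Variables D1 D2 : nat.
Hypotheses (g1 : (1 < D1)%N) (g2 : (1 < D2)%N) (sq1 : squarefree D1) (sq2 : squarefree D2)
  (ne : D1 <> D2).

Local Notation s1 := (Num.sqrt (D1%:R : realalg)).
Local Notation s2 := (Num.sqrt (D2%:R : realalg)).

Lemma nsq1 (q : rat) : q ^+ 2 != D1%:R.
Proof. have [r pr o] := sqf_log D1 g1 sq1; exact: nosq_log _ _ pr o q. Qed.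
Lemma nsq2 (q : rat) : q ^+ 2 != D2%:R.
Proof. have [r pr o] := sqf_log D2 g2 sq2; exact: nosq_log _ _ pr o q. Qed.
Lemma nsq12 (q : rat) : q ^+ 2 != D1%:R * D2%:R.
Proof. rewrite -natrM; have [r pr o] := sqf_log2 D1 D2 g1 g2 sq1 sq2 ne; exact: nosq_log _ _ pr o q. Qed.

Lemma embG0 x : embG s1 s2 x = 0 -> x = (0, 0, 0, 0).
Proof.
case: x => [[[a b] c] d] /= e.
have h1 : s1 ^+ 2 = ratr (D1%:R) by rewrite ratr_nat sqrt_sq.
have h2 : s2 ^+ 2 = ratr (D2%:R) by rewrite ratr_nat sqrt_sq.
by have [-> -> -> ->] := indep4 _ _ _ _ _ h1 h2 nsq1 nsq2 nsq12 _ _ _ _ e.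
Qed.

Lemma embG_inj x y : embG s1 s2 x = embG s1 s2 y -> x = y.
Proof.
case: x => [[[a b] c] d]; case: y => [[[a' b'] c'] d'] e.
have : embG s1 s2 (a - a', b - b', c - c', d - d') = 0.
  move: e => /= /eqP; rewrite -subr_eq0 => /eqP <-.
  rewrite ?(rmorphD, rmorphN); ring.
move/embG0; case=> /eqP h1 /eqP h2 /eqP h3 /eqP h4.
by move: h1 h2 h3 h4; rewrite !subr_eq0 => /eqP -> /eqP -> /eqP -> /eqP ->.
Qed.

Lemma val0E x : val0 D1 D2 x = embG s1 s2 x.
Proof. by rewrite /val0 emb_embG /sgnb !mul1r. Qed.

Lemma transfer p x : root (map_poly (fun z : int => z%:~R : realalg) p) (val0 D1 D2 x) ->
  forall (R : numFieldType) (r1 r2 : R), r1 ^+ 2 = D1%:R -> r2 ^+ 2 = D2%:R ->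
  root (map_poly (fun z : int => z%:~R : R) p) (embG r1 r2 x).
Proof.
move=> rt R r1 r2 h1 h2; have [e He] := poly_bq D1 D2 p x.
move: rt; rewrite /root val0E (He _ _ _ (sqrt_sq D1) (sqrt_sq D2)) => /eqP /embG0 e0.
by rewrite He // e0 /= !rmorph0 !mul0r !addr0.
Qed.

Lemma transfer_mul x y : val0 D1 D2 x * val0 D1 D2 y = 1 ->
  forall (R : numFieldType) (r1 r2 : R), r1 ^+ 2 = D1%:R -> r2 ^+ 2 = D2%:R ->
  embG r1 r2 x * embG r1 r2 y = 1.
Proof.
move=> h R r1 r2 h1 h2.
have : embG s1 s2 (mulbq D1 D2 x y) = embG s1 s2 (cstbq 1).
  by rewrite (embG_mul (sqrt_sq D1) (sqrt_sq D2)) embG_cst rmorph1 -!val0E.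
move/embG_inj => E.
by rewrite -(embG_mul h1 h2) E embG_cst rmorph1.
Qed.

Lemma normK_nq x : normK D1 D2 x = ratr (nq D1 D2 x).
Proof.
rewrite /normK !big_ord_recl big_ord0 mulr1 /embi /= !emb_embG /sgnb !mulN1r !mul1r !mulrA.
by rewrite (norm_formula _ _ _ _ _ (sqrt_sq D1) (sqrt_sq D2)).
Qed.


Lemma AintG (p : {poly int}) x : p \is monic ->
  root (map_poly (fun z : int => z%:~R : realalg) p) (val0 D1 D2 x) ->
  forall r1 r2 : algC, r1 ^+ 2 = D1%:R -> r2 ^+ 2 = D2%:R -> embG r1 r2 x \in Aint.
Proof.
move=> mp rt r1 r2 h1 h2.
have rt2 := transfer _ _ rt _ _ _ h1 h2.
apply: (root_monic_Aint rt2).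
  exact: monic_map.
by apply/polyOverP => i; rewrite coef_map /= intr_int.
Qed.

Lemma norm_pm1 eta : unitK D1 D2 eta -> nq D1 D2 eta = 1 \/ nq D1 D2 eta = -1.
Proof.
case=> [[p [mp rp]] [y [[q [mq rq]] ey]]].
pose rA : algC := sqrtC D1%:R; pose rB : algC := sqrtC D2%:R.
have hA : rA ^+ 2 = D1%:R by apply: sqrtCK.
have hB : rB ^+ 2 = D2%:R by apply: sqrtCK.
have hA' : (- rA) ^+ 2 = D1%:R by rewrite sqrrN.
have hB' : (- rB) ^+ 2 = D2%:R by rewrite sqrrN.
have nA : (ratr (nq D1 D2 eta) : algC) \in Num.int.
  apply: Cint_rat_Aint; first exact: Crat_rat.
  rewrite -(norm_formula _ _ _ _ _ hA hB) !rpredM //; apply: (AintG _ _ mp rp) => //.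
have nY : (ratr (nq D1 D2 y) : algC) \in Num.int.
  apply: Cint_rat_Aint; first exact: Crat_rat.
  rewrite -(norm_formula _ _ _ _ _ hA hB) !rpredM //; apply: (AintG _ _ mq rq) => //.
have prod1 : ratr (nq D1 D2 eta) * ratr (nq D1 D2 y) = 1 :> algC.
  rewrite -!(norm_formula _ _ _ _ _ hA hB); apply: prod4; exact: transfer_mul.
have [k Hk] := intrP nA; have [k' Hk'] := intrP nY.
have kk : k * k' = 1.
  by apply: (@intr_inj algC); rewrite intrM -Hk -Hk' prod1.
have [k1|k1] := int_unit _ _ kk; [left|right]; apply: (fmorph_inj (@ratr algC)).
  by rewrite rmorph1; apply: (eq_trans Hk); rewrite k1.
by rewrite rmorphN1; apply: (eq_trans Hk); rewrite k1.
Qed.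

End Main.

Lemma unitK_cj D1 D2 (g1 : (1 < D1)%N) (g2 : (1 < D2)%N) (sq1 : squarefree D1)
  (sq2 : squarefree D2) (ne : D1 <> D2) (cj : bq -> bq) s t :
  (forall z, val0 D1 D2 (cj z) = emb D1 D2 s t z) ->
  forall x, unitK D1 D2 x -> unitK D1 D2 (cj x).
Proof.
move=> H x [[p [mp rp]] [y [[q [mq rq]] ey]]].
have hs1 : (sgnb s * Num.sqrt D1%:R : realalg) ^+ 2 = D1%:R by rewrite /sgnb sgnb_sq sqrt_sq.
have hs2 : (sgnb t * Num.sqrt D2%:R : realalg) ^+ 2 = D2%:R by rewrite /sgnb sgnb_sq sqrt_sq.
split.
  exists p; split => //; rewrite H emb_embG.
  exact: (transfer D1 D2 g1 g2 sq1 sq2 ne _ _ rp _ _ _ hs1 hs2).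
exists (cj y); split.
  exists q; split => //; rewrite H emb_embG.
  exact: (transfer D1 D2 g1 g2 sq1 sq2 ne _ _ rq _ _ _ hs1 hs2).
rewrite !H !emb_embG.
exact: (transfer_mul D1 D2 g1 g2 sq1 sq2 ne _ _ ey _ _ _ hs1 hs2).
Qed.

Lemma unitK_m1 D1 D2 : unitK D1 D2 (cstbq (-1)).
Proof.
have v : val0 D1 D2 (cstbq (-1)) = -1.
  by rewrite /val0 emb_embG embG_cst rmorphN1.
have rt : root (map_poly (fun z : int => z%:~R : realalg) ('X + 1)) (val0 D1 D2 (cstbq (-1))).
  rewrite v; have -> : (fun z : int => z%:~R : realalg) = @intmul _ 1 by [].
  by rewrite rmorphD /= map_polyX rmorph1 /root !hornerE addNr.
split; first by exists ('X + 1); split => //; exact: monicXaddC.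
exists (cstbq (-1)); split; first by exists ('X + 1); split => //; exact: monicXaddC.
by rewrite v mulrNN mulr1.
Qed.

Lemma xor4 (R : realDomainType) (x0 x1 x2 x3 : R) :
  x0 * (x1 * (x2 * x3)) < 0 -> (x0 < 0) (+) (x1 < 0) (+) (x2 < 0) (+) (x3 < 0).
Proof.
move=> h; have := lt_eqF h; rewrite !mulf_eq0 => /negbT.
rewrite !negb_or => /and4P [n0 n1 n2 n3].
move: h; rewrite !mulr_lt0 n0 n1 n2 n3 !mulf_neq0 //=.
by rewrite !addbA.
Qed.

Theorem lemma3p2 (D1 D2 : nat) :
  (1 < D1)%N -> (1 < D2)%N -> squarefree D1 -> squarefree D2 -> D1 <> D2 ->
  (sgnrk D1 D2 <= 3)%N ->
  forall eta : bq, unitK D1 D2 eta -> normK D1 D2 eta = 1.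
Proof.
move=> g1 g2 sq1 sq2 ne rk eta ueta.
have [n1|nm1] := norm_pm1 D1 D2 g1 g2 sq1 sq2 ne eta ueta.
  by rewrite normK_nq n1 rmorph1.
exfalso.
pose b (n : nat) := (emb D1 D2 (odd n) (2 <= n)%N eta < 0).
have inS v (x : bq) : unitK D1 D2 x -> sgnK D1 D2 x = v -> v \in unit_sgn_set D1 D2.
  by move=> ux sx; rewrite inE; apply/asboolP; exists x.
have odd4 : b 0%N (+) b 1%N (+) b 2%N (+) b 3%N.
  have := normK_nq D1 D2 eta; rewrite nm1 rmorphN1 /normK !big_ord_recl big_ord0 mulr1 /embi /=.
  move=> P; have : (-1 : realalg) < 0 by rewrite ltrN10.
  rewrite -P /b /bump /=; exact: xor4.
have I0 : \row_(i < 4) ((b i : nat)%:R : 'F_2) \in unit_sgn_set D1 D2.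
  by apply: (inS _ eta ueta); apply/rowP => i; rewrite !mxE.
have I1 : \row_(i < 4) ((b (p1 i) : nat)%:R : 'F_2) \in unit_sgn_set D1 D2.
  apply: (inS _ (cj1 eta)).
    by apply: (unitK_cj D1 D2 g1 g2 sq1 sq2 ne cj1 true false) => // z; rewrite /val0 emb_cj1.
  apply/rowP => i; rewrite !mxE /embi emb_cj1 /b.
  by case: i => [[|[|[|[|i]]]] ] //=.
have I2 : \row_(i < 4) ((b (p2 i) : nat)%:R : 'F_2) \in unit_sgn_set D1 D2.
  apply: (inS _ (cj2 eta)).
    by apply: (unitK_cj D1 D2 g1 g2 sq1 sq2 ne cj2 false true) => // z; rewrite /val0 emb_cj2.
  apply/rowP => i; rewrite !mxE /embi emb_cj2 /b.
  by case: i => [[|[|[|[|i]]]] ] //=.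
have I3 : \row_(i < 4) ((b (p3 i) : nat)%:R : 'F_2) \in unit_sgn_set D1 D2.
  apply: (inS _ (cj3 eta)).
    by apply: (unitK_cj D1 D2 g1 g2 sq1 sq2 ne cj3 true true) => // z; rewrite /val0 emb_cj3.
  apply/rowP => i; rewrite !mxE /embi emb_cj3 /b.
  by case: i => [[|[|[|[|i]]]] ] //=.
have Io : \row_(i < 4) (1 : 'F_2) \in unit_sgn_set D1 D2.
  apply: (inS _ _ (unitK_m1 D1 D2)).
  by apply/rowP => i; rewrite !mxE /embi emb_embG embG_cst rmorphN1 ltrN10.
have h4 := span4 (unit_sgn_set D1 D2) b odd4 I0 I1 I2 I3 Io.
by have := leq_trans h4 rk.
Qed.
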